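(* Let $X$ be a connected compact metrizable space and let $\Delta:\mathrm{C}^+_1(X)\to(0,1]$ be an order-preserving map. Then for every finite set $\mathcal F\subseteq\mathrm{C}(X)$ and every $\varepsilon>0$ there exist finite sets $\mathcal H_0,\mathcal H_1\subseteq\mathrm{C}^+_1(X)$, with $\mathcal H_0$ consisting of nonzero functions, and $\delta>0$ with the following property. Whenever $n,k,d\ge1$, $\pi_1,\dots,\pi_n:X^d\to X$ are coordinate projections (repetitions allowed), $x_1,\dots,x_k,y_1,\dots,y_k\in X$, and $\phi_0,\phi_1:\mathrm{C}(X)\to\mathrm{M}_{n+k}(\mathrm{C}(X^d))$ are the unital homomorphisms $$\phi_0(f)=\mathrm{diag}(f\circ\pi_1,\dots,f\circ\pi_n,f(x_1),\dots,f(x_k)),\quad \phi_1(f)=\mathrm{diag}(f\circ\pi_1,\dots,f\circ\pi_n,f(y_1),\dots,f(y_k)),$$ such that $\tau(\phi_0(h))>\Delta(h)$ and $\tau(\phi_1(h))>\Delta(h)$ for all $h\in\mathcal H_0$ and all $\tau\in\mathrm{T}(\mathrm{M}_{n+k}(\mathrm{C}(X^d)))$, and $|\tau(\phi_0(h)-\phi_1(h))|<\delta$ for all $h\in\mathcal H_1$ and all $\tau\in\mathrm{T}(\mathrm{M}_{n+k}(\mathrm{C}(X^d)))$, there is a unitary $u\in\mathrm{M}_{n+k}(\mathrm{C}(X^d))$ with $\|\phi_0(f)-u^*\phi_1(f)u\|<\varepsilon$ for all $f\in\mathcal F$.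
   Context: $\mathrm{C}^+_1(X)$ is the set of positive functions in $\mathrm{C}(X)$ of norm at most $1$. A coordinate projection $X^d\to X$ is a map $(z_1,\dots,z_d)\mapsto z_j$. Constants $f(x)$ are regarded as constant functions. $\mathrm{T}(B)$ denotes the tracial state space of $B$. *)

(* Defs.v *)
From HB Require Import structures.
From mathcomp Require Import all_boot all_order all_algebra.
From mathcomp Require Import all_classical all_reals all_analysis.
From mathcomp.real_closed Require Import complex.
Import Order.TTheory GRing.Theory Num.Theory.

Set Implicit Arguments.
Unset Strict Implicit.
Unset Printing Implicit Defensive.

Local Open Scope ring_scope.
Local Open Scope classical_set_scope.
Local Open Scope complex_scope.

(* The complex numbers R[i] (for R : realType) with their usual metric
   topology, given by the modulus |z - w|. *)
HB.instance Definition _ (R : rcfType) :=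
  PseudoPointedMetric.copy R[i] (R[i] : numClosedFieldType)^o.

Section Defs.
Variable R : realType.

(* C^+_1(X): continuous functions X -> C with 0 <= h(x) <= 1 for all x
   (positive and of sup-norm at most 1). The order on R[i] is the usual
   partial order: z <= w iff w - z is real and nonnegative. *)
Definition C1plus (X : topologicalType) (h : X -> R[i]) : Prop :=
  continuous h /\ (forall x, 0 <= h x /\ h x <= 1).

Definition mx_cont (Y : topologicalType) (m : nat) (a : Y -> 'M[R[i]]_m) : Prop :=
  forall i j, continuous (fun y => a y i j).

Definition mx_adj (m : nat) (A : 'M[R[i]]_m) : 'M[R[i]]_m :=
  map_mx Num.conj A^T.

(* tracial states on the C*-algebra M_m(C(Y)) (elements: entrywise
   continuous matrix-valued functions, operations pointwise) *)
Definition tracial_state (Y : topologicalType) (m : nat)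
    (tau : (Y -> 'M[R[i]]_m) -> R[i]) : Prop :=
  [/\ (forall a b, mx_cont a -> mx_cont b ->
         tau (fun y => a y + b y) = tau a + tau b),
      (forall (c : R[i]) a, mx_cont a -> tau (fun y => c *: a y) = c * tau a),
      (forall a, mx_cont a -> 0 <= tau (fun y => mx_adj (a y) *m a y)),
      tau (fun _ => 1%:M) = 1 &
      (forall a b, mx_cont a -> mx_cont b ->
         tau (fun y => a y *m b y) = tau (fun y => b y *m a y))].

Definition vnorm (m : nat) (v : 'cV[R[i]]_m) : R :=
  Num.sqrt (\sum_(i < m) ((complex.Re (v i 0)) ^+ 2 + (complex.Im (v i 0)) ^+ 2)).

Definition opnorm (m : nat) (A : 'M[R[i]]_m) : R :=
  sup [set vnorm (A *m v) | v in [set v : 'cV[R[i]]_m | vnorm v <= 1]].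

Definition cnorm (Y : topologicalType) (m : nat) (a : Y -> 'M[R[i]]_m) : R :=
  sup [set opnorm (a y) | y in [set: Y]].

Definition unitary (Y : topologicalType) (m : nat) (u : Y -> 'M[R[i]]_m) : Prop :=
  mx_cont u /\
  (forall y, mx_adj (u y) *m u y = 1%:M /\ u y *m mx_adj (u y) = 1%:M).

(* phi(f) = diag(f o pi_1, ..., f o pi_n, f(x_1), ..., f(x_k)) in
   M_{n+k}(C(X^d)), where pi_i = the coordinate projection z |-> z (p i). *)
Definition phi_diag (X : topologicalType) (d n k : nat) (p : 'I_n -> 'I_d)
    (xs : 'I_k -> X) (f : X -> R[i]) : {ptws 'I_d -> X} -> 'M[R[i]]_(n + k) :=
  fun z => diag_mx (\row_(i < n + k)
                     match fintype.split i with
                     | inl a => f (z (p a))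
                     | inr b => f (xs b)
                     end).

End Defs.

(* Main.v *)
Require Import Defs.
From HB Require Import structures.
From mathcomp Require Import all_boot all_order all_algebra.
From mathcomp Require Import all_classical all_reals all_analysis.
From mathcomp.real_closed Require Import complex.
From mathcomp Require Import fingroup perm finmap.
From mathcomp.algebra_tactics Require Import ring lra.
Import Order.TTheory GRing.Theory Num.Theory.
Local Open Scope ring_scope.
Local Open Scope classical_set_scope.
Local Open Scope complex_scope.
Section Hall.
Local Open Scope nat_scope.
Variables (A B : finType) (e : A -> B -> bool).
Definition nbr (M : {set B}) (S : {set A}) := [set b in M | [exists a in S, e a b]].

Lemma nbr_sub M (S T : {set A}) : S \subset T -> nbr M S \subset nbr M T.
Proof.
move=> sST; apply/fintype.subsetP=> b; rewrite !inE => /andP[-> /existsP[a /andP[aS eab]]].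
by apply/existsP; exists a; rewrite (fintype.subsetP sST a aS).
Qed.

Lemma hall (b0 : B) : forall N (L : {set A}) (M : {set B}), (#|L| < N)%N ->
  (forall S : {set A}, S \subset L -> (#|S| <= #|nbr M S|)%N) ->
  exists f : A -> B, {in L &, injective f} /\
    forall a, a \in L -> (f a \in M) && e a (f a).
Proof.
elim=> [//|N IH] L M hL hH.
case: (set_0Vmem L) => [->|[a0 a0L]].
  by exists (fun=> b0); split => ?; rewrite inE.
case: (boolP [exists S : {set A}, [&& S \proper L, S != finset.set0 & #|nbr M S| <= #|S|]]) => [/existsP [S /and3P [pSL nS0 tS]] | nt].
- have sSL := proper_sub pSL.
  have cS : (#|S| < N)%N by apply: leq_trans (proper_card pSL) _.
  have [f1 [i1 p1]] := IH S M cS (fun T sT => hH T (fintype.subset_trans sT sSL)).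
  pose M' := M :\: nbr M S.
  have hH2 : forall T : {set A}, T \subset L :\: S -> (#|T| <= #|nbr M' T|)%N.
    move=> T sT.
    have sTS : T :|: S \subset L.
      by rewrite finset.subUset sSL andbT (fintype.subset_trans sT) // subsetDl.
    have := hH _ sTS.
    have dTS : T :&: S = finset.set0.
      apply/setP=> a; rewrite !inE; apply/negbTE/andP=> [[aT aS]].
      by have := fintype.subsetP sT a aT; rewrite inE aS.
    rewrite finset.cardsU dTS cards0 subn0.
    have sub : nbr M (T :|: S) \subset nbr M' T :|: nbr M S.
      apply/fintype.subsetP=> b; rewrite /M' /nbr !inE => /andP[bM /existsP[a /andP[aTS eab]]].
      rewrite bM /=.
      case bS: [exists a0 in S, e a0 b]; first by rewrite orbT.
      rewrite orbF andbT /=.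
      apply/existsP; exists a; rewrite eab andbT.
      move: aTS; rewrite inE => /orP[//|aS].
      by move: bS => /existsP; case; exists a; rewrite aS.
    move=> h1; have h2 := subset_leq_card sub.
    have h3 := leq_card_setU (nbr M' T) (nbr M S).
    have : (#|T| + #|S| <= #|nbr M' T| + #|S|)%N.
      apply: (leq_trans h1); apply: (leq_trans h2); apply: (leq_trans h3).
      by rewrite leq_add2l.
    by rewrite leq_add2r.
  have cLS : (#|L :\: S| < N)%N.
    have pLS : L :\: S \proper L; last first.
      by apply: leq_trans (proper_card pLS) _; rewrite -ltnS.
    rewrite finset.properEneq subsetDl andbT; apply/negP => /eqP eLS.
    case/finset.set0Pn: nS0 => a aS.
    by have := fintype.subsetP sSL a aS; rewrite -eLS inE aS.
  have [f2 [i2 p2]] := IH (L :\: S) M' cLS hH2.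
  exists (fun a => if a \in S then f1 a else f2 a); split.
    move=> x y xL yL /=.
    case xS: (x \in S); case yS: (y \in S).
    + exact: i1.
    + move=> exy; have := p1 x xS; have := p2 y; rewrite !inE yS yL => /(_ isT).
      case/andP=> /andP[/negP hb _] _ /andP[hx ex]; exfalso; apply: hb.
      by rewrite -exy /nbr ?inE hx /=; apply/existsP; exists x; rewrite xS ex.
    + move=> exy; have := p1 y yS; have := p2 x; rewrite !inE xS xL => /(_ isT).
      case/andP=> /andP[/negP hb _] _ /andP[hx ex]; exfalso; apply: hb.
      by rewrite exy /nbr ?inE hx /=; apply/existsP; exists y; rewrite yS ex.
    + by apply: i2; rewrite inE ?xS ?yS.
  move=> a aL; case aS: (a \in S); first exact: p1.
  have := p2 a; rewrite inE aS aL => /(_ isT) /andP[]; rewrite inE => /andP[_ ->] ->.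
  by [].
- have nt' : forall S : {set A}, S \proper L -> S != finset.set0 -> (#|S| < #|nbr M S|)%N.
    move=> S pS nS; rewrite ltnNge; apply/negP => le.
    by move/existsP: nt; apply; exists S; rewrite pS nS le.
  have := hH [set a0]%SET; rewrite finset.sub1set a0L cards1 => /(_ isT).
  rewrite card_gt0 => /finset.set0Pn [b1]; rewrite inE => /andP[b1M /existsP[a /andP[]]].
  rewrite inE => /eqP -> eb1.
  have cL : (#|L :\ a0| < N)%N by move: hL; rewrite (cardsD1 a0 L) a0L.
  have hH2 : forall T : {set A}, T \subset L :\ a0 -> (#|T| <= #|nbr (M :\ b1) T|)%N.
    move=> T sT; case: (eqVneq T finset.set0) => [->|nT]; first by rewrite cards0.
    have pT : T \proper L.
      rewrite properE (fintype.subset_trans sT (subsetDl _ _)) /=.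
      apply/negP=> /fintype.subsetP /(_ a0 a0L) a0T.
      by have := fintype.subsetP sT a0 a0T; rewrite !inE eqxx.
    have := nt' T pT nT.
    have sub : nbr M T :\ b1 \subset nbr (M :\ b1) T.
      apply/fintype.subsetP=> b; rewrite !inE => /andP[nb /andP[bM ex]].
      by rewrite nb bM ex.
    move=> h; rewrite (cardsD1 b1 (nbr M T)) in h.
    apply: leq_trans (subset_leq_card sub).
    move: h; case: (b1 \in nbr M T) => h.
      by rewrite add1n ltnS in h.
    by rewrite add0n in h; exact: ltnW.
  have [f2 [i2 p2]] := IH (L :\ a0) (M :\ b1) cL hH2.
  exists (fun a => if a == a0 then b1 else f2 a); split.
    move=> x y xL yL /=.
    case: (eqVneq x a0) => [->|xa]; case: (eqVneq y a0) => [->|ya] //.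
    + move=> eb; have := p2 y; rewrite !inE ya yL => /(_ isT).
      by rewrite -eb eqxx.
    + move=> eb; have := p2 x; rewrite !inE xa xL => /(_ isT).
      by rewrite eb eqxx.
    + by apply: i2; rewrite !inE ?xa ?ya.
  move=> x xL; case: (eqVneq x a0) => [->|aa]; first by rewrite b1M eb1.
  have := p2 x; rewrite !inE aa xL => /(_ isT) /andP[/andP[_ ->] ->].
  by [].
Qed.
End Hall.
Section LA.
Variable R : realType.
Local Notation C := (R[i]).

Definition ptrace (Y : Type) (m : nat) (z0 : Y) (a : Y -> 'M[C]_m) : C :=
  (m%:R)^-1 * \tr (a z0).

Lemma ptrace_tracial (Y : topologicalType) (m : nat) (z0 : Y) : (0 < m)%N ->
  tracial_state (@ptrace Y m z0).
Proof.
move=> m0; rewrite /ptrace; split.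
- by move=> a b _ _; rewrite mxtraceD mulrDr.
- by move=> c a _; rewrite mxtraceZ mulrCA.
- move=> a _; apply: mulr_ge0; first by rewrite invr_ge0 ler0n.
  rewrite /mxtrace; apply: sumr_ge0 => i _; rewrite mxE; apply: sumr_ge0 => j _.
  by rewrite /mx_adj !mxE mulrC; exact: mul_conjC_ge0.
- by rewrite mxtrace1 mulVf // pnatr_eq0 -lt0n.
- by move=> a b _ _; rewrite mxtrace_mulC.
Qed.

Lemma realC_sum (I : finType) (F : I -> R) : \sum_i (F i)%:C = (\sum_i F i)%:C.
Proof. by rewrite rmorph_sum. Qed.

Lemma realC_natV (m : nat) : ((m%:R)^-1 : C) = ((m%:R)^-1 : R)%:C.
Proof. by rewrite fmorphV rmorph_nat. Qed.

Lemma tr_phi (X : topologicalType) d n k (p : 'I_n -> 'I_d) (xs : 'I_k -> X) (h : X -> C) z :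
  \tr (phi_diag p xs h z) = \sum_(a < n) h (z (p a)) + \sum_(b < k) h (xs b).
Proof.
rewrite /phi_diag mxtrace_diag big_split_ord /=.
congr (_ + _); apply: eq_bigr => i _; rewrite mxE.
  by rewrite (unsplitK (inl i : 'I_n + 'I_k)).
by rewrite (unsplitK (inr i : 'I_n + 'I_k)).
Qed.
End LA.
Section LA2.
Variable R : realType.
Local Notation C := (R[i]).

Definition n2 (z : C) : R := (complex.Re z) ^+ 2 + (complex.Im z) ^+ 2.

Lemma n2C z : (n2 z)%:C = `|z| ^+ 2.
Proof. by rewrite /n2 add_Re2_Im2. Qed.

Lemma n2_ge0 z : 0 <= n2 z.
Proof. by rewrite /n2 addr_ge0 // sqr_ge0. Qed.

Lemma n2M a b : n2 (a * b) = n2 a * n2 b.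
Proof. apply: (@complexI R); by rewrite rmorphM /= !n2C normrM exprMn. Qed.

Lemma n2_lt z (c : R) : `|z| < c%:C -> n2 z < c ^+ 2.
Proof.
move=> h; suff : (n2 z)%:C < (c ^+ 2)%:C by rewrite ltcR.
by rewrite n2C rmorphXn /= ltrXn2r.
Qed.

Lemma opnorm_diag m (M : 'M[C]_m) (c : R) : 0 <= c ->
  (forall i j, i != j -> M i j = 0) -> (forall i, n2 (M i i) <= c ^+ 2) ->
  opnorm M <= c.
Proof.
move=> c0 hoff hdiag; rewrite /opnorm; apply: ge_sup.
  have v0 : vnorm (0 : 'cV[C]_m) = 0.
    rewrite /vnorm big1 ?sqrtr0 // => i _; rewrite mxE /=.
    by rewrite expr0n addr0.
  exists (vnorm (M *m 0)); exists 0 => //=.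
  by rewrite v0.
move=> y [v /= hv <-].
have hv' : \sum_(i < m) n2 (v i 0) <= 1.
  have s0 : 0 <= \sum_(i < m) n2 (v i 0) by apply: sumr_ge0 => i _; exact: n2_ge0.
  rewrite -(sqr_sqrtr s0) -(expr1n _ 2%N).
  by rewrite ler_pXn2r ?nnegrE ?sqrtr_ge0 //; exact: hv.
have e : forall i, (M *m v) i 0 = M i i * v i 0.
  move=> i; rewrite mxE (bigD1 i) //= big1 ?addr0 // => j ji.
  by rewrite hoff ?mul0r // eq_sym.
rewrite /vnorm -[leRHS](ger0_norm c0) -sqrtr_sqr; apply: ler_wsqrtr.
apply: (@le_trans _ _ (\sum_(i < m) c ^+ 2 * n2 (v i 0))).
  apply: ler_sum => i _; rewrite e -/(n2 _) n2M.
  by apply: ler_wpM2r; [exact: n2_ge0 | exact: hdiag].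
rewrite -mulr_sumr -[leRHS]mulr1; apply: ler_wpM2l => //.
by rewrite sqr_ge0.
Qed.

Lemma cnorm_le (Y : topologicalType) m (a : Y -> 'M[C]_m) (c : R) (y0 : Y) :
  (forall y, opnorm (a y) <= c) -> cnorm a <= c.
Proof.
move=> h; rewrite /cnorm; apply: ge_sup.
  by exists (opnorm (a y0)); exists y0.
by move=> r [y _ <-].
Qed.
End LA2.
Section PM.
Variable R : realType.
Local Notation C := (R[i]).

Lemma mx_adj_perm m (s : {perm 'I_m}) : mx_adj (perm_mx s^-1 : 'M[C]_m) = perm_mx s.
Proof.
rewrite /mx_adj tr_perm_mx invgK; apply/matrixP=> i j; rewrite !mxE.
by case: (_ == _); rewrite ?conjC0 ?conjC1.
Qed.

Lemma unitary_perm (Y : topologicalType) m (s : {perm 'I_m}) :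
  unitary (fun _ : Y => (perm_mx s^-1 : 'M[C]_m)).
Proof.
split.
  by move=> i j; exact: cst_continuous.
move=> _; rewrite mx_adj_perm -!perm_mxM mulgV mulVg perm_mx1.
by [].
Qed.

Lemma conj_perm_entry m (s : {perm 'I_m}) (D : 'M[C]_m) i j :
  (perm_mx s *m D *m perm_mx s^-1) i j = D (s i) (s j).
Proof.
by rewrite -row_permE -col_permE !mxE.
Qed.

Variables (n k : nat) (sg : 'I_k -> 'I_k) (sg_inj : injective sg).

Definition tfun (i : 'I_(n + k)) : 'I_(n + k) :=
  unsplit (match fintype.split i with inl a => inl a | inr b => inr (sg b) end).

Lemma tfun_inj : injective tfun.
Proof.
move=> i j; rewrite /tfun => /(can_inj unsplitK).
case: (splitP i) => [a ea|b eb]; case: (splitP j) => [a' ea'|b' eb'] //=.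
- by case=> e; apply/val_inj; rewrite /= ea ea' e.
- by case=> /sg_inj e; apply/val_inj; rewrite /= eb eb' e.
Qed.

Definition tpm : {perm 'I_(n + k)} := perm tfun_inj.

Lemma tpm_l (a : 'I_n) : tpm (lshift k a) = lshift k a.
Proof. by rewrite permE /tfun (unsplitK (inl a : 'I_n + 'I_k)). Qed.

Lemma tpm_r (b : 'I_k) : tpm (rshift n b) = rshift n (sg b).
Proof. by rewrite permE /tfun (unsplitK (inr b : 'I_n + 'I_k)). Qed.
End PM.
Section Top.
Import numFieldNormedType.Exports.
Variable R : realType.
Local Notation C := (R[i]).

Lemma normC_real (r : R) : `|r%:C| = `|r|%:C.
Proof. by rewrite normc_def /= expr0n /= addr0 sqrtr_sqr. Qed.

Lemma realC_cont : continuous (fun r : R => r%:C : C).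
Proof.
move=> x; apply/cvg_ballP => e e0.
move: (e0); rewrite ltcE => /andP[/eqP Ie Re0].
have ee : e = (complex.Re e)%:C.
  by case: e e0 Ie Re0 => a b /= _ -> _.
apply: filterS (nbhsx_ballx x _ Re0) => y.
rewrite /ball /= -raddfB /= normC_real ee ltcR.
by [].
Qed.

Lemma contC (T : topologicalType) (g : T -> R) : continuous g ->
  continuous (fun x => (g x)%:C : C).
Proof.
move=> gc x; apply: (@continuous_comp _ _ _ g (fun r : R => r%:C : C)).
  exact: gc.
exact: realC_cont.
Qed.

Lemma near_all_seq (T : Type) (Fl : set_system T) (FF : Filter Fl)
  (I : eqType) (s : seq I) (P : I -> T -> Prop) :
  (forall i, i \in s -> \forall x \near Fl, P i x) ->
  \forall x \near Fl, forall i, i \in s -> P i x.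
Proof.
elim: s => [|a s IH] h.
  by apply: filterE => x i; rewrite in_nil.
have h1 := h a (mem_head a s).
have h2 := IH (fun i iin => h i (@mem_behead _ (a :: s) i iin)).
apply: filterS2 h1 h2 => x pa ps i; rewrite in_cons => /orP[/eqP ->|iin] //.
exact: ps.
Qed.

Lemma min_seq (T : eqType) (s : seq T) (g : T -> R) : (forall x, 0 < g x) ->
  exists2 eta, 0 < eta & forall x, x \in s -> eta <= g x.
Proof.
move=> gp; elim: s => [|a s [eta e0 he]].
  by exists 1 => // x; rewrite in_nil.
exists (Order.min (g a) eta); first by rewrite lt_min gp e0.
move=> x; rewrite in_cons => /orP[/eqP ->|xs]; first by rewrite ge_min lexx.
by rewrite ge_min he ?orbT.
Qed.

Lemma cptcov (T : topologicalType) : compact [set: T] -> cover_compact [set: T].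
Proof.
move=> c; have [[x0 _]|nT] := pselect (exists x : T, True); last first.
  move=> I D f _ _; exists finmap.fset0 => //= x; exfalso; apply: nT; by exists x.
pose XP : ptopologicalType := HB.pack_for ptopologicalType T (isPointed.Build T x0).
have e := @compact_cover XP.
have : @compact XP [set: XP] by exact: c.
by rewrite e.
Qed.

Variable X : pseudoMetricType R.

Lemma ballT {x y z : X} {e1 e2 e : R} : e1 + e2 <= e -> ball x e1 y -> ball y e2 z -> ball x e z.
Proof. by move=> le b1 b2; apply: (le_ball le); exact: ball_triangle b1 b2. Qed.

Lemma net (cpt : compact [set: X]) (r : R) : 0 < r ->
  exists s : seq X, forall x, exists2 w, w \in s & (ball w r)° x.
Proof.
move=> r0; move: cpt => /cptcov /(_ X setT (fun w => (ball w r)°)).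
case.
- by move=> i _; exact: open_interior.
- move=> x _; exists x => //; rewrite /interior /=; exact: nbhsx_ballx.
move=> D _ cov; exists (finmap.enum_fset D) => x.
by have [w wD bx] := cov x I; exists w.
Qed.

Lemma unif_cont (cpt : compact [set: X]) (F : set (X -> C)) (e : R) :
  finite_set F -> (forall f, F f -> continuous f) -> 0 < e ->
  exists2 eta, 0 < eta & forall f, F f -> forall x y, ball x eta y ->
    `|f x - f y| < e%:C.
Proof.
move=> /finite_fsetP [Fs ->] Fc e0.
have e20 : 0 < e / 2 by rewrite divr_gt0.
have loc : forall x, exists rho : R, 0 < rho /\ forall f, f \in Fs -> forall y,
    ball x (rho + rho) y -> `|f x - f y| < (e / 2)%:C.
  move=> x.
  have : \forall y \near x, forall f, f \in Fs -> `|f x - f y| < (e / 2)%:C.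
    apply: near_all_seq => f fF.
    have := Fc f fF x; move/cvg_ballP => /(_ (e / 2)%:C).
    rewrite ltcR => /(_ e20); exact.
  move/nbhs_ballP => [rho rho0 hrho].
  exists (rho / 2); split; first by rewrite divr_gt0.
  by move=> f fF y; rewrite -splitr => /hrho; apply.
have [rho hrho] := choice loc.
move: cpt => /cptcov /(_ X setT (fun w => (ball w (rho w))°)).
case.
- by move=> i _; exact: open_interior.
- move=> x _; exists x => //; rewrite /interior /=; apply: nbhsx_ballx.
  by case: (hrho x).
move=> D _ cov.
have [eta eta0 heta] := @min_seq _ (finmap.enum_fset D) rho (fun x => proj1 (hrho x)).
exists eta => // f fF a b ab.
have [w wD /interior_subset bwa] := cov a I.
have [_ hw] := hrho w.
have h1 := hw f fF a (le_ball _ bwa).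
have bwb : ball w (rho w + rho w) b.
  apply: ballT bwa ab; by rewrite lerD2l heta.
have h2 := hw f fF b bwb.
rewrite (_ : f a - f b = (f w - f b) - (f w - f a)); last by rewrite opprB [RHS]addrC [RHS]addrA subrK.
apply: le_lt_trans (ler_normB _ _) _.
rewrite (splitr e) rmorphD /= addrC; apply: ltrD => //.
apply: h1; by rewrite lerDl (ltW (proj1 (hrho w))).
Qed.
End Top.
Section Top2.
Import numFieldNormedType.Exports.
Variable R : realType.
Variable X : pseudoMetricType R.

Lemma urysohn_fn (A B : set X) (r : R) : 0 < r ->
  (forall a b, A a -> B b -> ~ ball a r b) ->
  exists g : X -> R, [/\ continuous (fun x => (g x)%:C : R[i]), (forall x, 0 <= g x <= 1),
     (forall x, A x -> g x = 0) & (forall x, B x -> g x = 1)].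
Proof.
move=> r0 sep.
have us : uniform_separator A B.
  apply: uniform_separatorW; exists [set xy : X * X | ball xy.1 r xy.2].
    exact: (@entourage_ball R X (PosNum r0)).
  apply/seteqP; split => // [[a b]] [[/= Aa Bb] ab].
  exact: (sep a b Aa Bb ab).
exists (Urysohn A B); split.
- by apply: contC; exact: Urysohn_continuous.
- move=> x; have /= := @Urysohn_range X R A B (Urysohn A B x) (ex_intro2 _ _ x I erefl).
  by rewrite in_itv.
- by move=> x Ax; apply: (Urysohn_sub0 us); exists x.
- by move=> x Bx; apply: (Urysohn_sub1 us); exists x.
Qed.

Lemma conn_arg (conn : connected [set: X]) m (w : 'I_m -> X) (r : R) : 0 < r ->
  (forall x, exists i, (ball (w i) r)° x) ->
  forall (Jp : 'I_m -> Prop) (j0 : 'I_m), Jp j0 ->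
  (exists i, (forall j, Jp j -> ~ ball (w j) (3 * r) (w i)) /\
             exists j, Jp j /\ ball (w j) (6 * r) (w i)) \/
  (forall x, exists i j, [/\ Jp j, ball (w j) (3 * r) (w i) & ball (w i) r x]).
Proof.
move=> r0 cov Jp j0 Jj0.
have [mid|nomid] := pselect (exists i, (forall j, Jp j -> ~ ball (w j) (3 * r) (w i)) /\
             exists j, Jp j /\ ball (w j) (6 * r) (w i)); first by left.
right.
pose close i := exists j, Jp j /\ ball (w j) (3 * r) (w i).
pose far i := forall j, Jp j -> ~ ball (w j) (6 * r) (w i).
have cf : forall i, close i \/ far i.
  move=> i; have [c|nc] := pselect (close i); first by left.
  right => j Jj bj; apply: nomid; exists i; split.
    by move=> j' Jj' bj'; apply: nc; exists j'.
  by exists j.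
pose Cs := \bigcup_(i in close) (ball (w i) r)°.
pose Fs := \bigcup_(i in far) (ball (w i) r)°.
have oC : open Cs by apply: bigcup_open => i _; exact: open_interior.
have oF : open Fs by apply: bigcup_open => i _; exact: open_interior.
have disj : forall x, Cs x -> Fs x -> False.
  move=> x [i [j [Jj bji]] /interior_subset bix] [i' fi' /interior_subset bi'x].
  apply: (fi' j Jj).
  have b1 : ball (w j) (4 * r) x by apply: ballT bji bix; lra.
  by apply: ballT b1 (ball_sym bi'x); lra.
have [i0 ci0] : exists i, (ball (w i) r)° (w j0) by apply: cov.
have CT : Cs = setT.
  apply: conn.
  - exists (w j0); exists i0 => //; exists j0; split => //.
    apply: le_ball (ball_sym (interior_subset ci0)); lra.
  - by exists Cs => //; rewrite setTI.
  - exists (~` Fs); first exact: open_closedC.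
    rewrite setTI; apply/seteqP; split => x.
      by move=> cx fx; exact: disj cx fx.
    move=> nfx; have [i ci] := cov x; case: (cf i) => [c|f].
      by exists i.
    by exfalso; apply: nfx; exists i.
move=> x; have : Cs x by rewrite CT.
case=> i [j [Jj bji]] /interior_subset bix.
by exists i, j.
Qed.
End Top2.
Section Tau.
Variable R : realType.
Local Notation C := (R[i]).
Variables (X : topologicalType) (d n k : nat) (p : 'I_n -> 'I_d).

Lemma tau_H1 (xs ys : 'I_k -> X) (g : X -> R) (z0 : {ptws 'I_d -> X}) :
  ptrace R _ (n + k) z0 (fun z => phi_diag p xs (fun x => (g x)%:C) z
                                  - phi_diag p ys (fun x => (g x)%:C) z)
  = (((n + k)%:R)^-1 * (\sum_b g (xs b) - \sum_b g (ys b)))%:C.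
Proof.
rewrite /ptrace /= linearB /= !tr_phi.
rewrite opprD addrACA subrr add0r !realC_sum realC_natV -raddfB /=.
by rewrite -rmorphM.
Qed.

Lemma tau_H0 (ys : 'I_k -> X) (g : X -> R) (w0 : X) : g w0 = 0 ->
  ptrace R _ (n + k) ((fun _ => w0) : {ptws 'I_d -> X})
     (phi_diag p ys (fun x => (g x)%:C))
  = (((n + k)%:R)^-1 * \sum_b g (ys b))%:C.
Proof.
move=> g0; rewrite /ptrace /= tr_phi /= g0 big1 ?add0r // realC_sum realC_natV.
by rewrite -rmorphM.
Qed.
End Tau.
Section Ent.
Variable R : realType.
Local Notation C := (R[i]).
Lemma mxBE m (A B : 'M[C]_m) i j : (A - B) i j = A i j - B i j.
Proof. by rewrite !mxE. Qed.
Lemma phi_entry (X : topologicalType) d n k (p : 'I_n -> 'I_d) (xs : 'I_k -> X)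
  (f : X -> C) z i j : phi_diag p xs f z i j =
  (match fintype.split i with inl a => f (z (p a)) | inr b => f (xs b) end) *+ (i == j).
Proof. by rewrite /phi_diag !mxE. Qed.
End Ent.

Theorem theorem5p1 (R : realType) (X : pseudoMetricType R)
  (X_haus : hausdorff_space X) (X_cpt : compact [set: X])
  (X_conn : connected [set: X])
  (Delta : (X -> R[i]) -> R)
  (Delta_range : forall h, C1plus h -> 0 < Delta h <= 1)
  (Delta_mono : forall h h', C1plus h -> C1plus h' ->
     (forall x, h x <= h' x) -> Delta h <= Delta h') :
  forall (F : set (X -> R[i])) (eps : R),
    finite_set F -> (forall f, F f -> continuous f) -> 0 < eps ->
  exists (H0 H1 : set (X -> R[i])) (delta : R),
    [/\ finite_set H0 /\ finite_set H1,
        (forall h, H0 h -> C1plus h /\ h <> (fun _ => 0)),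
        (forall h, H1 h -> C1plus h), 0 < delta &
    forall (n k d : nat), (0 < n)%N -> (0 < k)%N -> (0 < d)%N ->
    forall (p : 'I_n -> 'I_d) (xs ys : 'I_k -> X),
      (forall tau : ({ptws 'I_d -> X} -> 'M[R[i]]_(n + k)) -> R[i],
         tracial_state tau -> forall h, H0 h ->
           (Delta h)%:C < tau (phi_diag p xs h) /\
           (Delta h)%:C < tau (phi_diag p ys h)) ->
      (forall tau : ({ptws 'I_d -> X} -> 'M[R[i]]_(n + k)) -> R[i],
         tracial_state tau -> forall h, H1 h ->
           `|tau (fun z => phi_diag p xs h z - phi_diag p ys h z)| < delta%:C) ->
      exists u : {ptws 'I_d -> X} -> 'M[R[i]]_(n + k),
        unitary u /\
        forall f, F f ->
          cnorm (fun z => phi_diag p xs f z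
                          - mx_adj (u z) *m phi_diag p ys f z *m u z) < eps].
Proof.
move=> F eps Ffin Fc eps0.
have eps20 : 0 < eps / 2 by rewrite divr_gt0.
have [eta eta0 hF] := @unif_cont R X X_cpt F (eps / 2) Ffin Fc eps20.
pose r := eta / 8.
have r0 : 0 < r by rewrite divr_gt0.
have [s hs] := @net R X X_cpt r r0.
pose m := size s.
pose w : 'I_m -> X := fun i => tnth (in_tuple s) i.
have cov : forall x, exists i, (ball (w i) r)° x.
  move=> x; have [w0 w0s bx] := hs x.
  have /tnthP [i ei] : w0 \in in_tuple s by [].
  by exists i; rewrite /w -ei.
have hb : forall i : 'I_m, exists g : X -> R, [/\ continuous (fun x => (g x)%:C : R[i]),
    (forall x, 0 <= g x <= 1), (forall x, ~ ball (w i) r x -> g x = 0)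
    & g (w i) = 1].
  move=> i.
  have sep : forall a b, [set x | ~ ball (w i) r x] a -> [set w i] b -> ~ ball a r b.
    by move=> a b Aa -> ab; exact: Aa (ball_sym ab).
  have [g [gc g01 gA gB]] := @urysohn_fn R X _ _ r r0 sep.
  exists g; split; [exact: gc | exact: g01 | move=> x; exact: gA | exact: gB].
have [bump hbump] := choice hb.
have hg : forall J : {set 'I_m}, exists g : X -> R, [/\ continuous (fun x => (g x)%:C : R[i]),
    (forall x, 0 <= g x <= 1),
    (forall x, (forall j, j \in J -> ~ ball (w j) (2 * r) x) -> g x = 0)
    & (forall x j, j \in J -> ball (w j) r x -> g x = 1)].
  move=> J.
  have sep : forall a b, [set x | forall j, j \in J -> ~ ball (w j) (2 * r) x] a ->
      [set x | exists j, j \in J /\ ball (w j) r x] b -> ~ ball a r b.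
    move=> a b Aa [j [jJ bj]] ab; apply: (Aa j jJ).
    by apply: ballT bj (ball_sym ab); lra.
  have [g [gc g01 gA gB]] := @urysohn_fn R X _ _ r r0 sep.
  exists g; split => //.
  by move=> x j jJ bj; apply: gB; exists j.
have [gJ hgJ] := choice hg.
pose hC := fun (g : X -> R) => (fun x => (g x)%:C) : X -> R[i].
have C1 : forall g : X -> R, continuous (fun x => (g x)%:C : R[i]) ->
    (forall x, 0 <= g x <= 1) -> C1plus (hC g).
  move=> g gc g01; split => // x; have /andP[a b] := g01 x; split.
    by rewrite /hC ler0c.
  by rewrite /hC -[1]/((1 : R)%:C) lecR.
have C1b : forall i, C1plus (hC (bump i)).
  by move=> i; case: (hbump i) => gc g01 _ _; exact: C1.
have C1g : forall J, C1plus (hC (gJ J)).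
  by move=> J; case: (hgJ J) => gc g01 _ _; exact: C1.
pose H0 := [set hC (bump i) | i in [set: 'I_m]].
pose H1 := [set hC (gJ J) | J in [set: {set 'I_m}]].
have Dp : forall i, 0 < Delta (hC (bump i)).
  by move=> i; case/andP: (Delta_range _ (C1b i)).
have [delta delta0 hdelta] := @min_seq R _ (enum 'I_m) (fun i => Delta (hC (bump i))) Dp.
exists H0, H1, delta; split.
- by split; apply: finite_image; exact: finite_finset.
- move=> h [i _ <-]; split; first exact: C1b.
  move=> /(congr1 (fun f => f (w i))); rewrite /hC.
  case: (hbump i) => _ _ _ ->.
  by move/eqP; rewrite -[0]/((0 : R)%:C) (inj_eq (@complexI R)) oner_eq0.
- by move=> h [J _ <-]; exact: C1g.
- exact: delta0.
move=> n k d n0 k0 d0 p xs ys hyp0 hyp1.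
have nk0 : (0 < n + k)%N by rewrite addn_gt0 n0.
have nkp : 0 < (n + k)%:R :> R by rewrite ltr0n.
have er : eta = 8 * r by rewrite /r mulrC divfK // pnatr_eq0.
pose b0 : 'I_k := Ordinal k0.
pose zx : {ptws 'I_d -> X} := fun _ => xs b0.
have factA : forall J, \sum_b gJ J (xs b) - \sum_b gJ J (ys b) < (n + k)%:R * delta.
  move=> J.
  have := hyp1 _ (@ptrace_tracial R _ (n + k) zx nk0) (hC (gJ J)) (ex_intro2 _ _ J I erefl).
  rewrite /hC tau_H1 normC_real ltcR => h.
  have e : forall D : R, D = (n + k)%:R * ((n + k)%:R^-1 * D).
    by move=> D; rewrite mulVKf // gt_eqF.
  by rewrite [X in X < _]e ltr_pM2l //; exact: le_lt_trans (ler_norm _) h.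
have factB : forall i j, bump i (w j) = 0 ->
    (n + k)%:R * Delta (hC (bump i)) < \sum_c bump i (ys c).
  move=> i j bz.
  have [_ h] := hyp0 _ (@ptrace_tracial R _ (n + k) ((fun _ => w j) : {ptws 'I_d -> X}) nk0)
    (hC (bump i)) (ex_intro2 _ _ i I erefl).
  move: h; rewrite /hC (@tau_H0 R X d n k p ys (bump i) (w j) bz) ltcR => h.
  by rewrite -(ltr_pM2l nkp) mulrA mulfV ?mul1r ?gt_eqF in h.
pose e := fun b c => `[< ball (xs b) eta (ys c) >].
have hallc : forall S : {set 'I_k}, S \subset finset.setT -> (#|S| <= #|nbr _ _ e finset.setT S|)%N.
  move=> S _.
  case: (set_0Vmem S) => [->|[bS bSS]]; first by rewrite cards0.
  pose J := [set j : 'I_m | `[< exists b, b \in S /\ ball (w j) r (xs b) >]]%SET.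
  have Jmem : forall j, j \in J -> exists b, b \in S /\ ball (w j) r (xs b).
    by move=> j; rewrite /J inE => /asboolP.
  have inN : forall c b, b \in S -> ball (xs b) eta (ys c) -> c \in nbr _ _ e finset.setT S.
    move=> c b bS' bb; rewrite /nbr !inE /=; apply/existsP; exists b.
    by rewrite bS' /=; apply/asboolP.
  have [j0 cj0] := cov (xs bS).
  have j0J : j0 \in J.
    by rewrite /J inE; apply/asboolP; exists bS; split => //; exact: interior_subset cj0.
  have [[i [nc3 [j1 [j1J b6]]]]|allc] :=
    @conn_arg R X X_conn m w r r0 cov (fun j => j \in J) j0 j0J; last first.
    have -> : nbr _ _ e finset.setT S = finset.setT.
      apply/setP => c; rewrite [in RHS]inE.
      have [i [j [jJ bji bic]]] := allc (ys c).
      have [b [bS' bjb]] := Jmem j jJ.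
      apply: (inN c b bS').
      have b1 : ball (xs b) (4 * r) (w i) by apply: ballT (ball_sym bjb) bji; lra.
      by apply: ballT b1 bic; lra.
    by rewrite cardsT; exact: max_card.
  have bz : bump i (w j1) = 0.
    case: (hbump i) => _ _ z _; apply: z => bij; apply: (nc3 j1 j1J).
    by apply: le_ball (ball_sym bij); lra.
  have fB := factB i j1 bz.
  have fA := factA J.
  have dl : delta <= Delta (hC (bump i)) by apply: hdelta; rewrite mem_enum.
  have dl' : (n + k)%:R * delta <= (n + k)%:R * Delta (hC (bump i)).
    by rewrite ler_pM2l.
  have lS : (#|S|%:R : R) <= \sum_b gJ J (xs b).
    rewrite -sumr_const big_mkcond /=; apply: ler_sum => b _.
    case: (hgJ J) => _ g01 _ g1.
    case: ifP => bS'; last by case/andP: (g01 (xs b)).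
    have [j cj] := cov (xs b).
    have jJ : j \in J.
      by rewrite /J inE; apply/asboolP; exists b; split => //; exact: interior_subset cj.
    by rewrite (g1 (xs b) j jJ) //; exact: interior_subset cj.
  have lN : \sum_c (gJ J (ys c) + bump i (ys c)) <= (#|nbr _ _ e finset.setT S|%:R : R).
    rewrite -sumr_const [X in _ <= X]big_mkcond /=; apply: ler_sum => c _.
    case: (hgJ J) => _ g01 g0 _.
    case: (hbump i) => _ b01 bz0 _.
    have := g01 (ys c); have := b01 (ys c); move=> /andP[bp b1] /andP[gp g1].
    case: (eqVneq (gJ J (ys c)) 0) => gy.
      rewrite gy add0r.
      have [bb|nbb] := pselect (ball (w i) r (ys c)); last first.
        by rewrite (bz0 _ nbb); case: ifP.
      have [b [bS' bjb]] := Jmem j1 j1J.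
      have b1' : ball (xs b) (7 * r) (w i) by apply: ballT (ball_sym bjb) b6; lra.
      rewrite (inN c b bS') //; apply: ballT b1' bb; lra.
    have [[j [jJ bj]]|nex] := pselect (exists j, j \in J /\ ball (w j) (2 * r) (ys c)); last first.
      by exfalso; move/eqP: gy; apply; apply: g0 => j jJ bj; apply: nex; exists j.
    have [b [bS' bjb]] := Jmem j jJ.
    rewrite (inN c b bS'); last by apply: ballT (ball_sym bjb) bj; lra.
    have [bb|nbb] := pselect (ball (w i) r (ys c)).
      exfalso; apply: (nc3 j jJ); apply: ballT bj (ball_sym bb); lra.
    by rewrite (bz0 _ nbb) addr0.
  rewrite big_split /= in lN.
  have : (#|S|%:R : R) < #|nbr _ _ e finset.setT S|%:R by lra.
  by rewrite ltr_nat => /ltnW.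
have hk : (#|(finset.setT : {set 'I_k})| < k.+1)%N by rewrite cardsT card_ord.
have [sg [sg_inj sg_e]] := @hall _ _ e b0 k.+1 finset.setT finset.setT hk hallc.
have sgi : injective sg by move=> x y; apply: sg_inj; rewrite finset.in_setT.
have sgb : forall b, ball (xs b) eta (ys (sg b)).
  by move=> b; have /andP[_ /asboolP] := sg_e b (finset.in_setT b).
pose t := tpm n k sg sgi.
exists (fun _ => perm_mx t^-1); split; first exact: unitary_perm.
move=> f Ff.
apply: (@le_lt_trans _ _ (eps / 2)); last by lra.
apply: (@cnorm_le R _ _ _ (eps / 2) zx) => z.
rewrite mx_adj_perm; apply: opnorm_diag; first lra.
  move=> i j ij; rewrite mxBE conj_perm_entry !phi_entry (negbTE ij).
  by rewrite (inj_eq perm_inj) (negbTE ij) !mulr0n subrr.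
move=> i; rewrite mxBE conj_perm_entry !phi_entry !eqxx !mulr1n.
rewrite -(splitK i); case: (fintype.split i) => [a|b] /=.
  rewrite tpm_l (unsplitK (inl a : 'I_n + 'I_k)) subrr.
  by rewrite /n2 /= expr0n /= addr0 sqr_ge0.
rewrite tpm_r (unsplitK (inr b : 'I_n + 'I_k)) (unsplitK (inr (sg b) : 'I_n + 'I_k)).
apply: ltW; apply: n2_lt; exact: hF Ff _ _ (sgb b).
Qed.
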